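(* Let $\boldsymbol\mu=\{\mu_t\}_{t>0}$ be a measurable factorizing family over $[0,1]\times L$, where $L$ is compact. Then the random-set system $\mathbb E^{\boldsymbol\mu}$ is spatial.
   Context: $L$ is a (compact) second countable Hausdorff space. For $t>0$, $\mathscr C_t$ is the space of closed subsets of $[0,t]\times L$ with the Borel $\sigma$-field $\Sigma_t$ of the Fell topology; $\oplus_{s,t}(Z_1,Z_2)=Z_1\cup\{(s+r,\ell):(r,\ell)\in Z_2\}$; $\sigma_t(Z)=\{(r/t,\ell):(r,\ell)\in Z\}$. A family of probability measures $\{\mu_t\}$ on $\mathscr C_t$ is a measurable factorizing family if: (i) $\mu_{s+t}\sim(\mu_s\otimes\mu_t)\circ\oplus_{s,t}^{-1}$ (mutual absolute continuity); (ii) $\mu_t(\{Z:Z\cap(\{r\}\times L)\neq\varnothing\})=0$ for all $t>0,r\in[0,t]$; (iii) no $\mu_t$ is supported on finitely many atoms; (iv a) there is a countable ring $\mathcal R\subset\Sigma_1$ generating $\Sigma_1$ with $t\mapsto(\sigma_t)_*\mu_t(A)$ Borel for each $A\in\mathcal R$; (iv b) there is a Borel $\Delta:(0,\infty)^2\times\mathscr C_1\to(0,\infty)$ with $\Delta(s,t,\sigma_{s+t}(Z))=\Delta_{s,t}(Z)$ $\mu_{s+t}$-a.e., $\Delta_{s,t}=d((\mu_s\otimes\mu_t)\circ\oplus_{s,t}^{-1})/d\mu_{s+t}$. The random-set system $\mathbb E^{\boldsymbol\mu}$ is the Arveson system with fibers $E_t=L^2(\mathscr C_t,\mu_t)$ and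 multiplication $U_{s,t}(f\otimes g)(Z)=\Delta_{s,t}(Z)^{1/2}f(Z\cap([0,s]\times L))g((Z\cap([s,s+t]\times L))-(s,0))$ (Borel structure generated by the sections $\mathbf 1_A$, $A\in\mathcal R$, after scaling by $\sigma_t$). It is spatial if it admits a unit: a nonzero Borel section $u_t\in E_t$ with $u_{s+t}=U_{s,t}(u_s\otimes u_t)$. *)

(* Defs.v *)
From HB Require Import structures.
From mathcomp Require Import all_boot all_order all_algebra.
From mathcomp Require Import all_classical all_reals all_analysis measurable_realfun.
Unset Printing Implicit Defensive.
Import Order.TTheory GRing.Theory Num.Theory.
Import numFieldNormedType.Exports.
Local Open Scope classical_set_scope.
Local Open Scope ring_scope.

Section ClosedSets.
Context (R : realType) (L : topologicalType).

Definition band (t : R) : set (R * L) := [set p | 0 <= p.1 <= t].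

Definition Cl (t : R) := {Z : set (R * L) | closed Z /\ Z `<=` band t}.

Lemma Cl0_proof (t : R) : closed (@set0 (R * L)) /\ set0 `<=` band t.
Proof. by split; [exact: closed0 | move=> ?]. Qed.

HB.instance Definition _ t := gen_eqMixin (Cl t).
HB.instance Definition _ t := gen_choiceMixin (Cl t).
HB.instance Definition _ t := isPointed.Build (Cl t) (exist _ set0 (Cl0_proof t)).

Definition fell_subbase (t : R) : set (set (Cl t)) :=
  [set B | (exists K : set (R * L), [/\ compact K, K `<=` band t &
              B = [set Z : Cl t | proj1_sig Z `&` K = set0]])
        \/ (exists G : set (R * L), open G /\
              B = [set Z : Cl t | proj1_sig Z `&` G !=set0])].

Definition fell_open (t : R) : set (set (Cl t)) :=
  [set U : set (Cl t) | forall Z, U Z -> exists n (f : 'I_n -> set (Cl t)),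
     [/\ forall i, fell_subbase t (f i), forall i, f i Z &
         forall Y, (forall i, f i Y) -> U Y]].

Definition ClM (t : R) := g_sigma_algebraType (fell_open t).

Definition mkCl (t : R) (X : set (R * L)) : ClM t :=
  match pselect (closed X /\ X `<=` band t) with
  | left h => exist _ X h
  | right _ => point
  end.

Definition oplus (s t : R) (Z : ClM s * ClM t) : ClM (s + t) :=
  mkCl (s + t) (proj1_sig Z.1 `|` [set p | proj1_sig Z.2 (p.1 - s, p.2)]).

Definition scale (t : R) (Z : ClM t) : ClM 1 :=
  mkCl 1 [set p | proj1_sig Z (p.1 * t, p.2)].

Definition restrL (s t : R) (Z : ClM (s + t)) : ClM s :=
  mkCl s (proj1_sig Z `&` band s).

Definition restrR (s t : R) (Z : ClM (s + t)) : ClM t :=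
  mkCl t [set p | proj1_sig Z (p.1 + s, p.2) /\ s <= p.1 + s <= s + t].

End ClosedSets.

Local Open Scope ereal_scope.

(** Conditions (i)-(iv) of a measurable factorizing family, relative to a
    chosen countable ring [Rg] (condition (iv a)) and a chosen Borel
    version [Delta] of the Radon-Nikodym derivatives (condition (iv b)). *)
Definition measurable_factorizing_family (R : realType) (L : topologicalType)
  (mu : forall t : R, probability (ClM R L t) R)
  (Rg : set (set (ClM R L 1)))
  (Delta : (R * R) * ClM R L 1 -> R) : Prop :=
  [/\ (forall s t : R, (0 < s)%R -> (0 < t)%R ->
         pushforward (mu s \x mu t) (oplus R L s t) `<< mu (s + t)%R /\
         mu (s + t)%R `<< pushforward (mu s \x mu t) (oplus R L s t)),
      (forall t r : R, (0 < t)%R -> (0 <= r <= t)%R ->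
         mu t [set Z : ClM R L t | exists l : L, proj1_sig Z (r, l)] = 0),
      (forall t : R, (0 < t)%R ->
         ~ exists n (f : 'I_n -> ClM R L t),
             measurable (range f) /\ mu t (range f) = 1),
      [/\ countable Rg, setring Rg, Rg `<=` measurable,
          <<s Rg >> = measurable &
          forall A, Rg A ->
            measurable_fun [set t : R | (0 < t)%R]
              (fun t => pushforward (mu t) (scale R L t) A)] &
      [/\ measurable_fun [set x : (R * R) * ClM R L 1 | (0 < x.1.1)%R /\ (0 < x.1.2)%R] Delta,
          (forall x : (R * R) * ClM R L 1, (0 < x.1.1)%R -> (0 < x.1.2)%R -> (0 < Delta x)%R) &
          forall s t : R, (0 < s)%R -> (0 < t)%R ->
            forall A : set (ClM R L (s + t)), measurable A ->
              pushforward (mu s \x mu t) (oplus R L s t) A =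
              \int[mu (s + t)%R]_(Z in A) (Delta ((s, t), scale R L (s + t) Z))%:E]].

(** A unit of the random-set system E^mu: a section t |-> u_t in
    L^2(C_t, mu_t; C), with u_t = ur t + i ui t. *)
Definition rs_unit (R : realType) (L : topologicalType)
  (mu : forall t : R, probability (ClM R L t) R)
  (Rg : set (set (ClM R L 1)))
  (Delta : (R * R) * ClM R L 1 -> R)
  (ur ui : forall t : R, ClM R L t -> R) : Prop :=
  [/\
      (forall t : R, (0 < t)%R ->
         [/\ measurable_fun setT (ur t), measurable_fun setT (ui t) &
             \int[mu t]_Z ((ur t Z) ^+ 2 + (ui t Z) ^+ 2)%:E < +oo]),
      (exists t : R, (0 < t)%R /\
         ~ {ae mu t, forall Z, ur t Z = 0%R /\ ui t Z = 0%R}),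
      (forall A, Rg A ->
         measurable_fun [set t : R | (0 < t)%R]
           (fun t => \int[mu t]_(Z in scale R L t @^-1` A) (ur t Z)%:E) /\
         measurable_fun [set t : R | (0 < t)%R]
           (fun t => \int[mu t]_(Z in scale R L t @^-1` A) (ui t Z)%:E)) &
      (* multiplicativity: u_{s+t} = U_{s,t}(u_s (x) u_t) in L^2(mu_{s+t}) *)
      (forall s t : R, (0 < s)%R -> (0 < t)%R ->
         {ae mu (s + t)%R, forall Z,
           let D := Num.sqrt (Delta ((s, t), scale R L (s + t) Z)) in
           let a1 := ur s (restrL R L s t Z) in
           let b1 := ui s (restrL R L s t Z) in
           let a2 := ur t (restrR R L s t Z) in
           let b2 := ui t (restrR R L s t Z) in
           ur (s + t)%R Z = (D * (a1 * a2 - b1 * b2))%R /\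
           ui (s + t)%R Z = (D * (a1 * b2 + b1 * a2))%R})].

Definition spatial (R : realType) (L : topologicalType)
  (mu : forall t : R, probability (ClM R L t) R)
  (Rg : set (set (ClM R L 1)))
  (Delta : (R * R) * ClM R L 1 -> R) : Prop :=
  exists ur ui : forall t : R, ClM R L t -> R, rs_unit R L mu Rg Delta ur ui.

(* Main.v *)
Require Import Defs.
From HB Require Import structures.
From mathcomp Require Import all_boot all_order all_algebra.
From mathcomp Require Import all_classical all_reals all_analysis measurable_realfun.
From mathcomp Require Import ring lra.
Import Order.TTheory GRing.Theory Num.Theory.
Import numFieldNormedType.Exports.
Local Open Scope classical_set_scope.
Local Open Scope ring_scope.
Lemma mkClE (R : realType) (L : topologicalType) (t : R) (X : set (R * L)) :
  closed X -> X `<=` band R L t -> proj1_sig (mkCl R L t X) = X.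
Proof. by move=> cX bX; rewrite /mkCl; case: pselect => // -[]. Qed.

Lemma mkCl0 (R : realType) (L : topologicalType) (t : R) (X : set (R * L)) :
  X = set0 -> proj1_sig (mkCl R L t X) = set0.
Proof. by move=> ->; rewrite /mkCl; case: pselect. Qed.

Lemma cont1 (R : realType) (L : topologicalType) (g : R -> R) :
  continuous g -> continuous (fun p : R * L => (g p.1, p.2)).
Proof.
move=> gc [x l].
apply: (@cvg_pair _ _ _ _ (nbhs (g x)) (nbhs l)) => /=.
  exact: (cvg_comp _ _ (@cvg_fst _ _ (nbhs x) (nbhs l) _) (gc x)).
exact: (@cvg_snd _ _ (nbhs x) (nbhs l) _).
Qed.

Lemma bandE (R : realType) (L : topologicalType) (t : R) :
  band R L t = [set` `[0, t]%R] `*` [set: L].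
Proof.
apply/seteqP; split => -[x l] /=; rewrite /band /= in_itv /=.
  by move=> ->.
by case.
Qed.

Lemma band_closed (R : realType) (L : topologicalType) (t : R) :
  closed (band R L t).
Proof.
have -> : band R L t = fst @^-1` ([set x : R | 0 <= x] `&` [set x | x <= t]).
  by apply/seteqP; split => -[x l] /=; rewrite /band /= => /andP.
apply: preimage_closed; last by apply: closedI; [exact: closed_ge|exact: closed_le].
by move=> [x l] _; exact: (@cvg_fst _ _ (nbhs x) (nbhs l) _).
Qed.

Lemma band_compact (R : realType) (L : topologicalType) (t : R) :
  compact [set: L] -> compact (band R L t).
Proof. by move=> cL; rewrite bandE; apply: compact_setX => //; exact: segment_compact. Qed.

Lemma fell_open_meas (R : realType) (L : topologicalType) (t : R) (U : set (ClM R L t)) :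
  fell_open R L t U -> measurable U.
Proof. by move=> h; apply: sub_gen_smallest. Qed.

Lemma sub_fell_open (R : realType) (L : topologicalType) (t : R) (U : set (Cl R L t)) :
  fell_subbase R L t U -> fell_open R L t U.
Proof.
move=> h Z UZ; exists 1%N, (fun _ => U); split => // Y; apply; exact: ord0.
Qed.

Lemma miss_meas (R : realType) (L : topologicalType) (t : R) (K : set (R * L)) :
  compact K -> K `<=` band R L t ->
  measurable [set Z : ClM R L t | proj1_sig Z `&` K = set0].
Proof.
move=> cK bK; apply: fell_open_meas; apply: sub_fell_open; left; by exists K.
Qed.

Lemma hit_meas (R : realType) (L : topologicalType) (t : R) (G : set (R * L)) :
  open G -> measurable [set Z : ClM R L t | proj1_sig Z `&` G !=set0].
Proof.
move=> oG; apply: fell_open_meas; apply: sub_fell_open; right; by exists G.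
Qed.

Definition Em (R : realType) (L : topologicalType) (t : R) : set (ClM R L t) :=
  [set Z | proj1_sig Z = set0].

Lemma Em_meas (R : realType) (L : topologicalType) (t : R) : measurable (Em R L t).
Proof.
have -> : Em R L t = ~` [set Z : ClM R L t | proj1_sig Z `&` setT !=set0].
  apply/seteqP; split => Z /=; rewrite /Em /= setIT.
    by move=> -> [].
  move=> h; apply/eqP; apply: contra_notT h => h; exact/set0P.
by apply: measurableC; apply: hit_meas; exact: openT.
Qed.

Lemma cont_mul (R : realType) (L : topologicalType) (t : R) :
  continuous (fun p : R * L => (p.1 * t, p.2)).
Proof. exact: (@cont1 R L (fun x => x * t) (@mulrr_continuous _ t)). Qed.

Lemma cont_add (R : realType) (L : topologicalType) (c : R) :
  continuous (fun p : R * L => (p.1 + c, p.2)).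
Proof.
apply: (@cont1 R L (fun x => x + c)) => x; apply: cvgD; [exact: cvg_id | exact: cvg_cst].
Qed.

Lemma scaleE (R : realType) (L : topologicalType) (t : R) (Z : ClM R L t) :
  0 < t -> proj1_sig (scale R L t Z) = [set p | proj1_sig Z (p.1 * t, p.2)].
Proof.
move=> t0; rewrite /scale; apply: (@mkClE R L 1).
  apply: (@preimage_closed _ _ (fun p : R * L => (p.1 * t, p.2))).
    by move=> p _; exact: cont_mul.
  by case: (proj2_sig Z).
move=> [x l] /= /(proj2 (proj2_sig Z)); rewrite /band /= => /andP[h1 h2].
apply/andP; split.
  by rewrite -(ler_pM2r t0) mul0r.
by rewrite -(ler_pM2r t0) mul1r.
Qed.

Lemma scale_miss (R : realType) (L : topologicalType) (t : R) (K : set (R * L)) :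
  0 < t ->
  scale R L t @^-1` [set Z : ClM R L 1 | proj1_sig Z `&` K = set0] =
  [set Z : ClM R L t | proj1_sig Z `&` ((fun p : R * L => (p.1 * t, p.2)) @` K) = set0].
Proof.
move=> t0; apply/seteqP; split => Z /=; rewrite scaleE //.
  move=> h; apply/seteqP; split => // q [Zq [p Kp epq]].
  have : ([set p | proj1_sig Z (p.1 * t, p.2)] `&` K) p by split => //=; rewrite epq.
  by rewrite h.
move=> h; apply/seteqP; split => // p [Zp Kp].
have : (proj1_sig Z `&` ((fun p : R * L => (p.1 * t, p.2)) @` K)) (p.1 * t, p.2).
  by split => //; exists p.
by rewrite h.
Qed.

Lemma scale_hit (R : realType) (L : topologicalType) (t : R) (G : set (R * L)) :
  0 < t ->
  scale R L t @^-1` [set Z : ClM R L 1 | proj1_sig Z `&` G !=set0] =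
  [set Z : ClM R L t | proj1_sig Z `&` ((fun q : R * L => (q.1 / t, q.2)) @^-1` G) !=set0].
Proof.
move=> t0; apply/seteqP; split => Z /=; rewrite scaleE //.
  move=> [p [Zp Gp]]; exists (p.1 * t, p.2); split => //=.
  by rewrite mulfK ?gt_eqF //; case: p Zp Gp.
move=> [q [Zq Gq]]; exists (q.1 / t, q.2); split => //=.
by rewrite divfK ?gt_eqF //; case: q Zq Gq.
Qed.

Lemma scale_subbase (R : realType) (L : topologicalType) (t : R) (U : set (Cl R L 1)) :
  0 < t -> fell_subbase R L 1 U -> fell_subbase R L t (scale R L t @^-1` U).
Proof.
move=> t0 [[K [cK bK ->]]|[G [oG ->]]].
  left; exists ((fun p : R * L => (p.1 * t, p.2)) @` K); split.
  - apply: continuous_compact => //.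
    apply: continuous_subspaceT; exact: cont_mul.
  - move=> _ [[x l] /bK + <-]; rewrite /band /= => /andP[h1 h2].
    apply/andP; split; first by rewrite mulr_ge0 // ltW.
    by rewrite -[X in _ <= X]mul1r ler_pM2r.
  - exact: scale_miss.
right; exists ((fun q : R * L => (q.1 / t, q.2)) @^-1` G); split.
  apply: open_comp => // q _; exact: (@cont_mul R L t^-1).
exact: scale_hit.
Qed.

Lemma scale_open (R : realType) (L : topologicalType) (t : R) (U : set (Cl R L 1)) :
  0 < t -> fell_open R L 1 U -> fell_open R L t (scale R L t @^-1` U).
Proof.
move=> t0 oU Z /= UZ; have [n [f [fs fZ fU]]] := oU _ UZ.
exists n, (fun i => scale R L t @^-1` f i); split => //.
- by move=> i; apply: scale_subbase.
- by move=> Y fY; apply: fU.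
Qed.

Lemma scale_meas (R : realType) (L : topologicalType) (t : R) :
  0 < t -> measurable_fun setT (scale R L t).
Proof.
move=> t0; apply: (@measurability _ _ (ClM R L t) (ClM R L 1) setT (scale R L t) (fell_open R L 1)) => //.
move=> _ [U oU <-]; rewrite setTI; apply: fell_open_meas; exact: scale_open.
Qed.

Lemma strip_closed (R : realType) (L : topologicalType) (a b : R) :
  closed [set q : R * L | a <= q.1 <= b].
Proof.
have -> : [set q : R * L | a <= q.1 <= b] = fst @^-1` ([set x : R | a <= x] `&` [set x | x <= b]).
  by apply/seteqP; split => -[x l] /= => /andP.
apply: preimage_closed; last by apply: closedI; [exact: closed_ge|exact: closed_le].
by move=> [x l] _; exact: (@cvg_fst _ _ (nbhs x) (nbhs l) _).
Qed.

Lemma oplusE (R : realType) (L : topologicalType) (s t : R) (Z1 : ClM R L s) (Z2 : ClM R L t) :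
  0 <= s -> 0 <= t ->
  proj1_sig (oplus R L s t (Z1, Z2)) =
  proj1_sig Z1 `|` [set p | proj1_sig Z2 (p.1 - s, p.2)].
Proof.
move=> s0 t0; rewrite /oplus /=; apply: mkClE.
  apply: closedU; first by case: (proj2_sig Z1).
  apply: (@preimage_closed _ _ (fun p : R * L => (p.1 + - s, p.2))).
    by move=> p _; exact: cont_add.
  by case: (proj2_sig Z2).
move=> [x l] [/(proj2 (proj2_sig Z1))|/(proj2 (proj2_sig Z2))];
  rewrite /band /= => /andP[h1 h2]; apply/andP; split; lra.
Qed.

Lemma oplus_Em (R : realType) (L : topologicalType) (s t : R) :
  0 <= s -> 0 <= t ->
  oplus R L s t @^-1` Em R L (s + t) = Em R L s `*` Em R L t.
Proof.
move=> s0 t0; apply/seteqP; split => -[Z1 Z2]; rewrite /Em /= oplusE //.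
  move=> h; split.
    by apply/seteqP; split => // p Zp; rewrite -h; left.
  apply/seteqP; split => // -[x l] Zp.
  have : (set0 : set (R * L)) (x + s, l) by rewrite -h; right; rewrite /= addrK.
  by [].
by move=> [-> ->]; apply/seteqP; split => // p [].
Qed.

Lemma oplus_miss (R : realType) (L : topologicalType) (s t : R) :
  0 < s -> 0 < t ->
  oplus R L s t @^-1` [set Z : ClM R L (s + t) | proj1_sig Z `&` band R L s = set0] =
  Em R L s `*` [set Z : ClM R L t | proj1_sig Z `&` band R L 0 = set0].
Proof.
move=> s0 t0; apply/seteqP; split => -[Z1 Z2]; rewrite /Em /= oplusE ?ltW //.
  move=> h; split.
    apply/seteqP; split => // p Zp.
    have : (set0 : set (R * L)) p.
      by rewrite -h; split; [left | exact: (proj2 (proj2_sig Z1))].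
    by [].
  apply/seteqP; split => // -[x l] [Zp]; rewrite /band /= => /andP[h1 h2].
  have : (set0 : set (R * L)) (x + s, l).
    rewrite -h; split; first by right; rewrite /= addrK.
    rewrite /band /=; apply/andP; split; lra.
  by [].
move=> [h1 h2]; apply/seteqP; split => // -[x l] [[Zp|Zp]].
  by rewrite h1 in Zp.
rewrite /band /= => /andP[b1 b2].
have := proj2 (proj2_sig Z2) _ Zp; rewrite /band /= => /andP[c1 c2].
have : (proj1_sig Z2 `&` band R L 0) (x - s, l).
  by split => //; rewrite /band /=; apply/andP; split; lra.
by rewrite h2.
Qed.

Definition e1 (R : realType) (L : topologicalType) : ClM R L 1 := mkCl R L 1 set0.

Lemma scale_Em (R : realType) (L : topologicalType) (t : R) (Z : ClM R L t) :
  Em R L t Z -> scale R L t Z = e1 R L.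
Proof.
rewrite /Em /scale /e1 => h; congr mkCl; apply/seteqP; split => p //=.
by rewrite h.
Qed.

Lemma Em_scale (R : realType) (L : topologicalType) (t : R) :
  0 < t -> scale R L t @^-1` Em R L 1 = Em R L t.
Proof.
move=> t0; apply/seteqP; split => Z; rewrite /Em /=.
  rewrite scaleE // => h; apply/seteqP; split => // -[x l] Zq.
  have : [set p | proj1_sig Z (p.1 * t, p.2)] (x / t, l) by rewrite /= divfK ?gt_eqF.
  by rewrite h.
by move=> /(@scale_Em R L t Z) ->; rewrite /e1 mkCl0.
Qed.

Lemma restrLE (R : realType) (L : topologicalType) (s t : R) (Z : ClM R L (s + t)) :
  proj1_sig (restrL R L s t Z) = proj1_sig Z `&` band R L s.
Proof.
rewrite /restrL; apply: mkClE; last by move=> p [].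
by apply: closedI; [case: (proj2_sig Z) | exact: band_closed].
Qed.

Lemma restrRE (R : realType) (L : topologicalType) (s t : R) (Z : ClM R L (s + t)) :
  proj1_sig (restrR R L s t Z) =
  [set p | proj1_sig Z (p.1 + s, p.2) /\ s <= p.1 + s <= s + t].
Proof.
rewrite /restrR; apply: mkClE.
  have -> : [set p | proj1_sig Z (p.1 + s, p.2) /\ s <= p.1 + s <= s + t] =
    (fun p : R * L => (p.1 + s, p.2)) @^-1` (proj1_sig Z `&` [set q | s <= q.1 <= s + t]).
    by [].
  apply: preimage_closed; first by move=> p _; exact: cont_add.
  by apply: closedI; [case: (proj2_sig Z) | exact: strip_closed].
move=> [x l] [_] /= /andP[h1 h2]; rewrite /band /=; apply/andP; split; lra.
Qed.

Lemma restr_nonempty (R : realType) (L : topologicalType) (s t : R) (Z : ClM R L (s + t)) :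
  ~ Em R L (s + t) Z -> ~ Em R L s (restrL R L s t Z) \/ ~ Em R L t (restrR R L s t Z).
Proof.
rewrite /Em /= restrLE restrRE => /eqP /set0P [[x l] Zq].
have := proj2 (proj2_sig Z) _ Zq; rewrite /band /= => /andP[h1 h2].
have [xs|xs] := leP x s.
  left => /seteqP [+ _] => /(_ (x, l)) h; apply: h; split => //.
  by rewrite /band /=; apply/andP; split.
right => /seteqP [+ _] => /(_ (x - s, l)) h; apply: h => /=; rewrite subrK; split => //.
apply/andP; split; lra.
Qed.

Local Open Scope ereal_scope.

Lemma rel_Em (R : realType) (L : topologicalType)
  (mu : forall t : R, probability (ClM R L t) R)
  (Delta : (R * R) * ClM R L 1 -> R)
  (hD : forall s t : R, (0 < s)%R -> (0 < t)%R ->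
            forall A : set (ClM R L (s + t)), measurable A ->
              pushforward (mu s \x mu t) (oplus R L s t) A =
              \int[mu (s + t)%R]_(Z in A) (Delta ((s, t), scale R L (s + t) Z))%:E)
  (s t : R) : (0 < s)%R -> (0 < t)%R ->
  mu s (Em R L s) * mu t (Em R L t) =
  (Delta ((s, t), e1 R L))%:E * mu (s + t)%R (Em R L (s + t)).
Proof.
move=> s0 t0; have := hD s t s0 t0 _ (Em_meas R L (s + t)).
rewrite /pushforward oplus_Em ?ltW //.
have -> : (mu s \x mu t) (Em R L s `*` Em R L t) = mu s (Em R L s) * mu t (Em R L t).
  by apply: product_measure1E; exact: Em_meas.
move=> ->.
rewrite (eq_integral (fun _ => (Delta ((s, t), e1 R L))%:E)); last first.
  by move=> Z /set_mem /scale_Em ->.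
by rewrite integral_cst //; exact: Em_meas.
Qed.

Lemma scale_preimage_meas (R : realType) (L : topologicalType) (t : R) (A : set (ClM R L 1)) :
  (0 < t)%R -> measurable A -> measurable (scale R L t @^-1` A).
Proof.
move=> t0 mA; rewrite -(setTI (_ @^-1` _)); exact: scale_meas.
Qed.

Lemma dynkin_step (R : realType) (L : topologicalType)
  (mu : forall t : R, probability (ClM R L t) R)
  (Rg : set (set (ClM R L 1)))
  (hr : setring Rg) (hg : <<s Rg >> = measurable)
  (hRg : forall A, Rg A ->
            measurable_fun [set t : R | (0 < t)%R]
              (fun t => pushforward (mu t) (scale R L t) A))
  (A : set (ClM R L 1)) : measurable A ->
  measurable_fun [set t : R | (0 < t)%R] (fun t => mu t (scale R L t @^-1` A)).
Proof.
move=> mA.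
apply: (@dynkin_induction _ (ClM R L 1) Rg
  (fun A => measurable_fun [set t : R | (0 < t)%R] (fun t => mu t (scale R L t @^-1` A)))); last by rewrite hg.
- by rewrite hg.
- move=> X Y RX RY; have [_ _ hDI] := hr; rewrite -setDD; apply: (hDI) => //; exact: (hDI).
- rewrite (_ : (fun t => _) = cst 1); first exact: measurable_cst.
  by apply/funext => t; rewrite preimage_setT probability_setT.
- exact: hRg.
- move=> S mS PS.
  apply: (@eq_measurable_fun _ _ _ _ _ (fun t => 1 - mu t (scale R L t @^-1` S))).
    move=> t /set_mem /= t0.
    by rewrite -preimage_setC probability_setC //; exact: scale_preimage_meas.
  by apply: emeasurable_funB => //; exact: measurable_cst.
- move=> F mF tF PF.
  apply: (@emeasurable_fun_cvg _ _ _ _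
    (fun n t => \sum_(0 <= i < n) mu t (scale R L t @^-1` F i))).
    by move=> n; apply: emeasurable_sum => i; exact: PF.
  move=> t /= t0; rewrite preimage_bigcup.
  apply: (@measure_sigma_additive _ _ _ (mu t) (fun i => scale R L t @^-1` F i)).
    by move=> i; exact: scale_preimage_meas.
  move=> i j _ _ [Z [Zi Zj]]; apply: tF => //; by exists (scale R L t Z).
Qed.

Lemma Dom_meas (R : realType) (L : topologicalType) :
  measurable [set x : (R * R) * ClM R L 1 | (0 < x.1.1)%R /\ (0 < x.1.2)%R].
Proof.
have -> : [set x : (R * R) * ClM R L 1 | (0 < x.1.1)%R /\ (0 < x.1.2)%R] =
  ([set` `]0%R, +oo[] `*` [set` `]0%R, +oo[]) `*` setT.
  apply/seteqP; split => -[[a b] Z] /=; rewrite !in_itv /= !andbT.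
    by move=> [-> ->].
  by move=> [[-> ->] _].
apply: measurableX => //; exact: measurableX.
Qed.

Lemma push_null (R : realType) (L : topologicalType)
  (mu : forall t : R, probability (ClM R L t) R)
  (Delta : (R * R) * ClM R L 1 -> R)
  (hDm : measurable_fun [set x : (R * R) * ClM R L 1 | (0 < x.1.1)%R /\ (0 < x.1.2)%R] Delta)
  (hDp : forall x : (R * R) * ClM R L 1, (0 < x.1.1)%R -> (0 < x.1.2)%R -> (0 < Delta x)%R)
  (hD : forall s t : R, (0 < s)%R -> (0 < t)%R ->
            forall A : set (ClM R L (s + t)), measurable A ->
              pushforward (mu s \x mu t) (oplus R L s t) A =
              \int[mu (s + t)%R]_(Z in A) (Delta ((s, t), scale R L (s + t) Z))%:E)
  (s t : R) (s0 : (0 < s)%R) (t0 : (0 < t)%R) (A : set (ClM R L (s + t))) :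
  measurable A -> pushforward (mu s \x mu t) (oplus R L s t) A = 0 ->
  mu (s + t)%R A = 0.
Proof.
move=> mA; rewrite hD // => h0.
set f := fun Z => (Delta ((s, t), scale R L (s + t) Z))%:E.
have st0 : (0 < s + t)%R by rewrite addr_gt0.
have mf : measurable_fun A f.
  apply/measurable_EFinP.
  apply: (@measurable_comp _ _ _ _ _ _ _ Delta A (fun Z => ((s, t), scale R L (s + t) Z))).
  - exact: Dom_meas.
  - by move=> _ [Z _ <-] /=.
  - exact: hDm.
  - apply: (measurable_funS measurableT) => //.
    by apply: measurable_fun_pair; [exact: measurable_cst | exact: scale_meas].
have : \int[mu (s + t)%R]_(x in A) `|f x| = 0.
  rewrite -h0; apply: eq_integral => Z _.
  by rewrite gee0_abs // lee_fin ltW // hDp.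
move/(ae_eq_integral_abs _ mA mf) => [N [mN N0 sub]].
apply/eqP; rewrite -measure_le0 -N0; apply: le_measure; rewrite ?inE //.
move=> Z AZ; apply: sub => /= /(_ AZ) /eqP.
by rewrite /f eqe gt_eqF // hDp.
Qed.

Lemma tube (R : realType) (L : topologicalType) (cL : compact [set: L])
  (X : set (R * L)) : closed X -> (forall l, ~ X (0%R, l)) ->
  exists n : nat, forall p, X p -> ~ (0 <= p.1 <= n.+1%:R^-1)%R.
Proof.
move=> cX hX.
have oX : open (~` X) by rewrite openC.
have [N _ hN] : \forall n \near \oo, [set: L] `<=`
    (fun l => forall x : R, (0 <= x <= n.+1%:R^-1)%R -> ~ X (x, l)).
  apply: (proj1 (compact_near_coveringP _) cL) => l _.
  have : nbhs (0%R, l) (~` X) by rewrite openE in oX; exact: (oX _ (hX l)).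
  case=> -[N1 N2] /= [nN1 nN2] sub.
  have [e /= e0 be] := (proj1 (nbhs_ballP _ _)) nN1.
  exists (N2, [set n : nat | (n.+1%:R^-1 < e)%R]); first split => //=.
    exact: (near_infty_natSinv_lt (PosNum e0)).
  move=> [l' n] /= [N2l' ne] x /andP[x0 xn].
  apply: (sub (x, l')); split => //=; apply: be.
  rewrite /ball /= sub0r normrN ger0_norm //; exact: le_lt_trans xn ne.
exists N => -[x l] Xp /andP[h1 h2].
by apply: (hN N (leqnn N) l I x); [apply/andP; split|].
Qed.

Lemma miss_zero (R : realType) (L : topologicalType) (cL : compact [set: L])
  (mu : forall t : R, probability (ClM R L t) R)
  (Delta : (R * R) * ClM R L 1 -> R)
  (hDm : measurable_fun [set x : (R * R) * ClM R L 1 | (0 < x.1.1)%R /\ (0 < x.1.2)%R] Delta)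
  (hDp : forall x : (R * R) * ClM R L 1, (0 < x.1.1)%R -> (0 < x.1.2)%R -> (0 < Delta x)%R)
  (hD : forall s t : R, (0 < s)%R -> (0 < t)%R ->
            forall A : set (ClM R L (s + t)), measurable A ->
              pushforward (mu s \x mu t) (oplus R L s t) A =
              \int[mu (s + t)%R]_(Z in A) (Delta ((s, t), scale R L (s + t) Z))%:E)
  (T s : R) : (0 < s)%R -> (s < T)%R -> mu s (Em R L s) = 0 ->
  mu T [set Z : ClM R L T | proj1_sig Z `&` band R L s = set0] = 0.
Proof.
move=> s0 sT h.
have [t t0 ->] : exists2 t, (0 < t)%R & T = (s + t)%R.
  by exists (T - s)%R; [rewrite subr_gt0 | rewrite addrC subrK].
apply: (@push_null R L mu Delta hDm hDp hD s t s0 t0).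
  apply: miss_meas; first exact: band_compact.
  move=> [x l]; rewrite /band /= => /andP[h1 h2]; apply/andP; split => //; lra.
rewrite /pushforward oplus_miss //.
have -> : (mu s \x mu t) (Em R L s `*` [set Z : ClM R L t | proj1_sig Z `&` band R L 0 = set0]) =
    mu s (Em R L s) * mu t [set Z : ClM R L t | proj1_sig Z `&` band R L 0 = set0].
  apply: product_measure1E; first exact: Em_meas.
  apply: miss_meas; first exact: band_compact.
  move=> [x l]; rewrite /band /= => /andP[h1 h2]; apply/andP; split => //; lra.
by rewrite h mul0e.
Qed.

Lemma pos_exists (R : realType) (L : topologicalType) (cL : compact [set: L])
  (mu : forall t : R, probability (ClM R L t) R)
  (Delta : (R * R) * ClM R L 1 -> R)
  (hDm : measurable_fun [set x : (R * R) * ClM R L 1 | (0 < x.1.1)%R /\ (0 < x.1.2)%R] Delta)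
  (hDp : forall x : (R * R) * ClM R L 1, (0 < x.1.1)%R -> (0 < x.1.2)%R -> (0 < Delta x)%R)
  (hD : forall s t : R, (0 < s)%R -> (0 < t)%R ->
            forall A : set (ClM R L (s + t)), measurable A ->
              pushforward (mu s \x mu t) (oplus R L s t) A =
              \int[mu (s + t)%R]_(Z in A) (Delta ((s, t), scale R L (s + t) Z))%:E)
  (hii : forall t r : R, (0 < t)%R -> (0 <= r <= t)%R ->
         mu t [set Z : ClM R L t | exists l : L, proj1_sig Z (r, l)] = 0) :
  exists e : R, (0 < e)%R /\ mu e (Em R L e) != 0.
Proof.
apply: contrapT => H.
have H0 e : (0 < e)%R -> mu e (Em R L e) = 0.
  move=> e0; apply/eqP; apply: contrapT => ne; apply: H; exists e; split => //.
  exact/negP.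
have epos n : (0 < n.+2%:R^-1 :> R)%R by rewrite invr_gt0 ltr0n.
have elt1 n : (n.+2%:R^-1 < 1 :> R)%R by rewrite invf_lt1 ?ltr0n // ltr1n.
pose M := fun n : nat => [set Z : ClM R L 1 | proj1_sig Z `&` band R L (n.+2%:R^-1) = set0].
have mM n : measurable (M n).
  apply: miss_meas; first exact: band_compact.
  move=> [x l]; rewrite /band /= => /andP[h1 h2]; apply/andP; split => //.
  exact: (le_trans h2 (ltW (elt1 n))).
have M0 n : mu 1%R (M n) = 0.
  by apply: (@miss_zero R L cL mu Delta hDm hDp hD) => //; apply: H0.
pose H1 := [set Z : ClM R L 1 | exists l : L, proj1_sig Z (0%R, l)].
have HC : ~` H1 = [set Z : ClM R L 1 | proj1_sig Z `&` band R L 0 = set0].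
  apply/seteqP; split => Z /=.
    move=> nH; apply/seteqP; split => // -[x l] [Zp]; rewrite /band /= => /andP[h1 h2].
    by apply: nH; exists l; have <- : x = 0%R by apply/le_anti; rewrite h1 h2.
  move=> h [l Zl].
  have : (proj1_sig Z `&` band R L 0) (0%R, l) by split => //; rewrite /band /= lexx.
  by rewrite h.
have mHC : measurable (~` H1).
  rewrite HC; apply: miss_meas; first exact: band_compact.
  move=> [x l]; rewrite /band /= => /andP[h1 h2]; apply/andP; split => //; lra.
have mH : measurable H1 by rewrite -(setCK H1); exact: measurableC.
have h1 : mu 1%R (~` H1) = 1.
  by rewrite probability_setC // hii //= ?lexx ?ler01 // sube0.
have sub : ~` H1 `<=` \bigcup_n M n.
  move=> Z nH.
  have [n hn] := @tube R L cL _ (proj1 (proj2_sig Z)) (fun l hl => nH (ex_intro _ l hl)).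
  exists n => //; apply/seteqP; split => // p [Zp]; rewrite /band /= => /andP[b1 b2].
  apply: (hn p Zp); apply/andP; split => //; apply: (le_trans b2).
  by rewrite lef_pV2 ?posrE ?ltr0n // ler_nat.
have := measure_sigma_subadditive (mu 1%R) mM mHC sub.
move=> le; have : (1 <= 0 :> \bar R)%E.
  rewrite -[X in (X <= _)%E]h1; apply: (le_trans le).
  by rewrite eseries0 // => i _ _; exact: M0.
by rewrite lee_fin ler10.
Qed.

Definition Pf (R : realType) (L : topologicalType)
  (mu : forall t : R, probability (ClM R L t) R) (t : R) : R :=
  fine (mu t (Em R L t)).

Definition cf (R : realType) (L : topologicalType)
  (mu : forall t : R, probability (ClM R L t) R) (t : R) : R :=
  Num.sqrt ((Pf R L mu t)^-1).

Definition urf (R : realType) (L : topologicalType)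
  (mu : forall t : R, probability (ClM R L t) R) (t : R) (Z : ClM R L t) : R :=
  (cf R L mu t * \1_(Em R L t) Z)%R.

Lemma mu_fin (R : realType) (L : topologicalType)
  (mu : forall t : R, probability (ClM R L t) R) (t : R) (X : set (ClM R L t)) :
  measurable X -> mu t X = (fine (mu t X))%:E.
Proof.
move=> mX; rewrite fineK // ge0_fin_numE ?measure_ge0 //.
exact: (le_lt_trans (probability_le1 _ mX) (ltry _)).
Qed.

Lemma PE (R : realType) (L : topologicalType)
  (mu : forall t : R, probability (ClM R L t) R) (t : R) :
  mu t (Em R L t) = (Pf R L mu t)%:E.
Proof. by rewrite /Pf -mu_fin //; exact: Em_meas. Qed.

Lemma P_ge0 (R : realType) (L : topologicalType)
  (mu : forall t : R, probability (ClM R L t) R) (t : R) : (0 <= Pf R L mu t)%R.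
Proof. by rewrite -lee_fin -PE measure_ge0. Qed.

Lemma sqrtV_mul (R : realType) (p : R) : (0 <= p)%R -> (Num.sqrt (p^-1) * p = Num.sqrt p)%R.
Proof.
move=> hp; have [->|pn0] := eqVneq p 0%R; first by rewrite mulr0 sqrtr0.
have p0 : (0 < p)%R by rewrite lt_neqAle eq_sym pn0 hp.
rewrite sqrtrV ?ltW // -{2}(sqr_sqrtr (ltW p0)) expr2 mulrA mulVf ?mul1r //.
by rewrite gt_eqF // sqrtr_gt0.
Qed.

Lemma int_k (R : realType) (L : topologicalType)
  (mu : forall t : R, probability (ClM R L t) R) (t : R) (B : set (ClM R L t)) (k : R) :
  measurable B -> (0 <= k)%R ->
  \int[mu t]_(Z in B) (k * \1_(Em R L t) Z)%:E = k%:E * mu t (Em R L t `&` B).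
Proof.
move=> mB k0.
rewrite (eq_integral (fun Z => k%:E * (\1_(Em R L t) Z)%:E)); last first.
  by move=> Z _; rewrite EFinM.
rewrite ge0_integralZl_EFin //.
all: try (by rewrite integral_indic //; exact: Em_meas).
all: try (by move=> Z _; rewrite lee_fin indicE).
all: try (by apply/measurable_EFinP; apply: measurable_indic; exact: Em_meas).
all: try (exact: sqrtr_ge0).
all: idtac.
Qed.

Lemma int_urf (R : realType) (L : topologicalType)
  (mu : forall t : R, probability (ClM R L t) R) (t : R) (B : set (ClM R L t)) :
  measurable B ->
  \int[mu t]_(Z in B) (urf R L mu t Z)%:E = (cf R L mu t)%:E * mu t (Em R L t `&` B).
Proof.
by move=> mB; rewrite /urf int_k //; exact: sqrtr_ge0.
Qed.

Local Close Scope ereal_scope.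

Theorem corollary3p3 (R : realType) (L : topologicalType)
  (hL : hausdorff_space L) (scL : @second_countable L) (cL : compact [set: L])
  (mu : forall t : R, probability (ClM R L t) R)
  (Rg : set (set (ClM R L 1)))
  (Delta : (R * R) * ClM R L 1 -> R) :
  measurable_factorizing_family R L mu Rg Delta ->
  spatial R L mu Rg Delta.
Proof.
move=> [hi hii hiii [cRg hr hsub hg hRg] [hDm hDp hD]].
have rel s t : 0 < s -> 0 < t ->
    Pf R L mu s * Pf R L mu t = Delta ((s, t), e1 R L) * Pf R L mu (s + t).
  move=> s0 t0; have := @rel_Em R L mu Delta hD s t s0 t0.
  by rewrite !PE -!EFinM => -[].
have mm := @dynkin_step R L mu Rg hr hg hRg (Em R L 1) (Em_meas R L 1).
exists (urf R L mu), (fun _ _ => 0); split.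
- move=> t t0; split.
  + apply: measurable_funM; first exact: measurable_cst.
    apply: measurable_indic; exact: Em_meas.
  + exact: measurable_cst.
  + rewrite (eq_integral (fun Z => ((Pf R L mu t)^-1 * \1_(Em R L t) Z)%:E)); last first.
      move=> Z _; have -> : (0:R) ^+ 2 = 0 by rewrite expr2 mulr0.
      rewrite addr0 /urf exprMn /cf sqr_sqrtr ?invr_ge0 ?P_ge0 // indicE.
      by case: (Z \in _); rewrite ?expr1n ?expr2 ?mulr0.
    rewrite int_k ?invr_ge0 ?P_ge0 //.
    by rewrite setIT PE -EFinM ltry.
- have [e [e0 ne]] := @pos_exists R L cL mu Delta hDm hDp hD hii.
  exists e; split => // -[N [mN N0 sub]].
  have Pe : 0 < Pf R L mu e.
    rewrite lt_neqAle P_ge0 andbT eq_sym; apply: contra ne => /eqP h.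
    by rewrite PE h.
  have : (mu e (Em R L e) <= mu e N)%E.
    apply: le_measure; rewrite ?inE //; first exact: Em_meas.
    move=> Z EZ; apply: sub => /= -[+ _]; rewrite /urf indicE mem_set // mulr1.
    by apply/eqP; rewrite gt_eqF // sqrtr_gt0 invr_gt0.
  rewrite N0 PE lee_fin => h.
  by move: Pe; rewrite lt_neqAle P_ge0 andbT eq_sym => /eqP; apply; apply: le_anti; rewrite h P_ge0.
- move=> A RA; have mA := hsub _ RA; split; last first.
    rewrite (_ : (fun t => _) = cst 0%E); first exact: measurable_cst.
    by apply/funext => t; exact: integral0.
  have key t : 0 < t -> (\int[mu t]_(Z in scale R L t @^-1` A) (urf R L mu t Z)%:E =
      (cf R L mu t)%:E * mu t (Em R L t `&` scale R L t @^-1` A))%E.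
    by move=> t0; apply: int_urf; exact: scale_preimage_meas.
  case: (pselect (A (e1 R L))) => hA.
    apply: (@eq_measurable_fun _ _ _ _ _
      (fun t => (Num.sqrt (fine (mu t (scale R L t @^-1` Em R L 1))))%:E)).
      move=> t /set_mem /= t0; rewrite key // Em_scale //.
      have -> : Em R L t `&` scale R L t @^-1` A = Em R L t.
        apply/seteqP; split => [Z []//|Z EZ]; split => //.
        by rewrite /= scale_Em.
      by rewrite PE -EFinM /cf sqrtV_mul ?P_ge0.
    apply/measurable_EFinP.
    have ms : measurable_fun setT (@Num.sqrt R).
      exact: (continuous_measurable_fun (@sqrt_continuous R)).
    apply: (measurableT_comp ms).
    apply: measurableT_comp => //.
  apply: (@eq_measurable_fun _ _ _ _ _ (cst 0%E)); last exact: measurable_cst.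
  move=> t /set_mem /= t0; rewrite key //.
  have -> : Em R L t `&` scale R L t @^-1` A = set0.
    by apply/seteqP; split => // Z [EZ]; rewrite /= scale_Em.
  by rewrite measure0 mule0.
- move=> s t s0 t0.
  have st0 : 0 < s + t by rewrite addr_gt0.
  have gen : forall Z : ClM R L (s + t),
      (Em R L (s + t) Z -> Pf R L mu (s + t) != 0) ->
      (urf R L mu (s + t) Z = Num.sqrt (Delta ((s, t), scale R L (s + t) Z)) *
        (urf R L mu s (restrL R L s t Z) * urf R L mu t (restrR R L s t Z) - 0 * 0)) /\
      ((0:R) = Num.sqrt (Delta ((s, t), scale R L (s + t) Z)) *
        (urf R L mu s (restrL R L s t Z) * 0 + 0 * urf R L mu t (restrR R L s t Z))).
    move=> Z hZ; split; last by rewrite mulr0 mul0r addr0 mulr0.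
    rewrite mul0r subr0.
    case: (pselect (Em R L (s + t) Z)) => EZ.
      have EL : Em R L s (restrL R L s t Z).
        by rewrite /Em /= restrLE EZ set0I.
      have ER : Em R L t (restrR R L s t Z).
        by rewrite /Em /= restrRE; apply/seteqP; split => // p []; rewrite EZ.
      rewrite scale_Em // /urf !indicE !mem_set // !mulr1.
      have hP := hZ EZ.
      have Pst : 0 < Pf R L mu (s + t) by rewrite lt_neqAle eq_sym hP P_ge0.
      have d0 := hDp ((s, t), e1 R L) s0 t0.
      have hrel := rel s t s0 t0.
      have Ps : 0 < Pf R L mu s.
        rewrite lt_neqAle P_ge0 andbT eq_sym; apply/eqP => h.
        by move: hrel; rewrite h mul0r => /esym/eqP; rewrite mulf_eq0 !gt_eqF.
      have Pt : 0 < Pf R L mu t.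
        rewrite lt_neqAle P_ge0 andbT eq_sym; apply/eqP => h.
        by move: hrel; rewrite h mulr0 => /esym/eqP; rewrite mulf_eq0 !gt_eqF.
      rewrite /cf -sqrtrM ?invr_ge0 ?P_ge0 // -sqrtrM; last exact: ltW.
      congr Num.sqrt.
      have -> : Delta ((s, t), e1 R L) = Pf R L mu s * Pf R L mu t / Pf R L mu (s + t).
        by rewrite hrel mulfK // gt_eqF.
      by field; rewrite !gt_eqF.
    rewrite /urf indicE memNset // mulr0.
    case: (@restr_nonempty R L s t Z EZ) => h; rewrite !indicE (memNset h) ?mulr0 ?mul0r ?mulr0 //.
  have [hP|hP] := eqVneq (Pf R L mu (s + t)) 0.
    exists (Em R L (s + t)); split; first exact: Em_meas.
      by rewrite PE hP.
    move=> Z /= hZ; apply: contrapT => nE; apply: hZ => /=.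
    by apply: gen => /nE.
  by apply: aeW => Z /=; apply: gen.
Qed.
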